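(* Let $\Gamma$ be a distance-regular graph with classical parameters $(D,b,\alpha,\beta)$ such that $b\ge2$ and $D\ge3$. Assume $\Gamma$ has the PLS$(\gamma)$ property for some $\gamma\ge3$, with lines the maximal cliques having at least $\gamma$ vertices. Let $r=[D]$. Then every vertex lies on at least $r$ lines, and a vertex lies on exactly $r$ lines if and only if it is a Delsarte vertex.
   Context: Distance-regular graph with intersection numbers $b_i,c_i$, valency $k=b_0$. For integer $b\ne1$, $[j]=\frac{b^j-1}{b-1}$. Classical parameters $(D,b,\alpha,\beta)$: diameter $D$, $b_i=([D]-[i])(\beta-\alpha[i])$, $c_i=[i](1+\alpha[i-1])$. A partial linear space is an incidence structure of points and lines in which any two distinct points lie on at most one common line; its point graph has points as vertices, adjacent iff on a common line. $\Gamma$ has the PLS$(\gamma)$ property ($\gamma\ge3$) if $\Gamma$ is the point graph of a partial linear space $(V(\Gamma),\mathcal L,\in)$ where $\mathcal L$ is the set of maximal cliques of $\Gamma$ with at least $\gamma$ vertices. A Delsarte clique is a clique with $1+\frac{k}{-\theta_{\min}}$ vertices, $\theta_{\min}$ the smallest adjacency eigenvalue. A Delsarte vertex is a vertex all of whose lines in $\mathcal L$ are Delsarte cliques. *)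

(* Defs.v *)
From HB Require Import structures.
From mathcomp Require Import all_boot all_order all_algebra.
From mathcomp Require Import reals.
Set Implicit Arguments. Unset Strict Implicit. Unset Printing Implicit Defensive.
Import Order.TTheory GRing.Theory Num.Theory.
Local Open Scope ring_scope.

Section Graphs.
Variable T : finType.
Variable e : rel T.

Definition simple_graph := symmetric e /\ irreflexive e.

Definition nbhd (x : T) : {set T} := [set y | e x y].

Fixpoint ball (n : nat) (x : T) : {set T} :=
  match n with
  | 0 => [set x]
  | n'.+1 => ball n' x :|: [set y | [exists z in ball n' x, e z y]]
  end.

Definition sphere (n : nat) (x : T) : {set T} :=
  match n with
  | 0 => [set x]
  | n'.+1 => ball n'.+1 x :\: ball n' x
  end.

Definition distance_regular (D : nat) (bi ci : nat -> nat) : Prop :=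
  [/\ simple_graph,
      (forall x y : T, y \in ball D x),
      (exists x y : T, y \in sphere D x) &
      (forall (i : nat) (x y : T), (i <= D)%N -> y \in sphere i x ->
         ((i < D)%N -> #|sphere i.+1 x :&: nbhd y| = bi i) /\
         ((1 <= i)%N -> #|sphere i.-1 x :&: nbhd y| = ci i))].

Definition clique (C : {set T}) : bool :=
  [forall x in C, forall y in C, (x != y) ==> e x y].

Definition maximal_clique (C : {set T}) : bool :=
  clique C && [forall C' : {set T}, (clique C' && (C \subset C')) ==> (C' == C)].

Definition is_line (gamma : nat) (C : {set T}) : bool :=
  maximal_clique C && (gamma <= #|C|)%N.

Definition lines_through (gamma : nat) (x : T) : {set {set T}} :=
  [set C : {set T} | is_line gamma C && (x \in C)].

(* Gamma is the point graph of the partial linear space (V, lines, \in) *)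
Definition PLS_property (gamma : nat) : Prop :=
  (3 <= gamma)%N /\
  (forall x y : T, x != y ->
     forall L1 L2 : {set T}, is_line gamma L1 -> is_line gamma L2 ->
       x \in L1 -> y \in L1 -> x \in L2 -> y \in L2 -> L1 = L2) /\
  (forall x y : T, x != y ->
     (e x y <-> exists L : {set T}, [/\ is_line gamma L, x \in L & y \in L])).

Section Spectral.
Variable R : realType.

Definition adjacency_matrix : 'M[R]_#|T| :=
  \matrix_(i, j) (e (enum_val i) (enum_val j))%:R.

Definition smallest_eigenvalue (theta : R) : Prop :=
  eigenvalue adjacency_matrix theta /\
  (forall mu : R, eigenvalue adjacency_matrix mu -> theta <= mu).

Definition delsarte_clique (k : nat) (C : {set T}) : Prop :=
  clique C /\
  exists theta : R, smallest_eigenvalue theta /\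
    (#|C|%:R : R) = 1 + k%:R / (- theta).

Definition delsarte_vertex (k gamma : nat) (x : T) : Prop :=
  forall C : {set T}, C \in lines_through gamma x -> delsarte_clique k C.
End Spectral.
End Graphs.

Definition qbr (R : realType) (b : int) (j : nat) : R :=
  ((b%:~R) ^+ j - 1) / (b%:~R - 1).

Definition classical_parameters (R : realType) (D : nat) (b : int)
  (alpha beta : R) (bi ci : nat -> nat) : Prop :=
  b != 1 /\
  (forall i : nat, (i < D)%N ->
     (bi i)%:R = (qbr R b D - qbr R b i) * (beta - alpha * qbr R b i)) /\
  (forall i : nat, (1 <= i <= D)%N ->
     (ci i)%:R = qbr R b i * (1 + alpha * qbr R b i.-1)).

(* Main.v *)
Require Import Defs.
From HB Require Import structures.
From mathcomp Require Import all_boot all_order all_algebra.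
From mathcomp Require Import reals.
From mathcomp Require Import zify ring lra.
Set Implicit Arguments. Unset Strict Implicit. Unset Printing Implicit Defensive.
Import Order.TTheory GRing.Theory Num.Theory.

Section Comb.
Variable T : finType.
Variable e : rel T.
Hypothesis esym : symmetric e.
Hypothesis eirr : irreflexive e.

Lemma ballS n x : ball e n x \subset ball e n.+1 x.
Proof. by rewrite /= subsetUl. Qed.

Lemma ball_mono m n x : m <= n -> ball e m x \subset ball e n x.
Proof.
elim: n => [|n IH]; first by rewrite leqn0 => /eqP ->.
rewrite leq_eqVlt => /orP [/eqP -> //| ]; rewrite ltnS => /IH H.
exact: subset_trans H (ballS n x).
Qed.

Lemma ball_adj n x y w : y \in ball e n x -> e y w -> w \in ball e n.+1 x.
Proof.
move=> hy hw /=; rewrite in_setU; apply/orP; right; rewrite inE.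
by apply/existsP; exists y; rewrite hy hw.
Qed.

Lemma mem_sphereS n x y :
  (y \in sphere e n.+1 x) = (y \in ball e n.+1 x) && (y \notin ball e n x).
Proof. by rewrite /sphere inE andbC. Qed.

Lemma mem_sphere0 x y : (y \in sphere e 0 x) = (y == x).
Proof. by rewrite /= inE. Qed.

Lemma sphere_ball n x y : y \in sphere e n x -> y \in ball e n x.
Proof.
case: n => [|n]; last by rewrite mem_sphereS => /andP [].
by rewrite mem_sphere0 => /eqP ->; rewrite ?eqxx ?inE.
Qed.

Lemma sphere_not_ball n m x y : y \in sphere e n x -> m < n -> y \notin ball e m x.
Proof.
case: n => [//|n]; rewrite mem_sphereS => /andP [_ hn]; rewrite ltnS => hm.
apply: contra hn; exact: (subsetP (ball_mono x hm)).
Qed.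

Lemma sphere_uniq i j x y : y \in sphere e i x -> y \in sphere e j x -> i = j.
Proof.
move=> hi hj; case: (ltngtP i j) => // h.
  by move: (sphere_not_ball hj h); rewrite (sphere_ball hi).
by move: (sphere_not_ball hi h); rewrite (sphere_ball hj).
Qed.

Lemma ball_sphere n x y : y \in ball e n x -> exists2 i, i <= n & y \in sphere e i x.
Proof.
elim: n => [|n IH] h; first by exists 0.
case hb: (y \in ball e n x).
  by case: (IH hb) => i hi hs; exists i => //; exact: leqW.
by exists n.+1 => //; rewrite mem_sphereS h hb.
Qed.

Lemma sphere_down n x y : y \in sphere e n.+1 x -> exists2 w, w \in sphere e n x & e w y.
Proof.
rewrite mem_sphereS /= in_setU => /andP [/orP [-> //|] ]; rewrite inE.
move=> /existsP [w /andP [hw hwy]] hn; exists w => //.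
case: n hw hn hwy => [|n] hw hn hwy; first by rewrite mem_sphere0; move: hw; rewrite /= inE.
rewrite mem_sphereS hw /=; apply: contra hn => hwn.
exact: ball_adj hwn hwy.
Qed.

Lemma sphere_adj i j x y w :
  y \in sphere e i x -> w \in sphere e j x -> e y w -> j <= i.+1 /\ i <= j.+1.
Proof.
move=> hy hw hyw; split; rewrite leqNgt; apply/negP => h.
  by move: (sphere_not_ball hw h); rewrite (ball_adj (sphere_ball hy) hyw).
by move: (sphere_not_ball hy h); rewrite (ball_adj (sphere_ball hw) _) // esym.
Qed.

Lemma sphere1E x y : (y \in sphere e 1 x) = e x y.
Proof.
apply/idP/idP.
  by case/sphere_down => w; rewrite mem_sphere0 => /eqP ->.
move=> h; rewrite mem_sphereS (ball_adj _ h) /=; last by rewrite /= inE.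
rewrite inE; apply: contraL h => /eqP ->; by rewrite eirr.
Qed.

End Comb.

Local Open Scope ring_scope.

Section DRG.
Variable R : realType.
Variable T : finType.
Variable e : rel T.
Hypothesis esym : symmetric e.
Hypothesis eirr : irreflexive e.
Variable D : nat.
Variables bi ci : nat -> nat.
Hypothesis D_gt0 : (0 < D)%N.
Hypothesis cover : forall x y : T, y \in ball e D x.
Hypothesis dr : forall (i : nat) (x y : T), (i <= D)%N -> y \in sphere e i x ->
         ((i < D)%N -> #|sphere e i.+1 x :&: nbhd e y| = bi i) /\
         ((1 <= i)%N -> #|sphere e i.-1 x :&: nbhd e y| = ci i).

Definition bb i : R := if (i < D)%N then (bi i)%:R else 0.
Definition cc i : R := if (0 < i <= D)%N then (ci i)%:R else 0.
Definition kk : R := (bi 0)%:R.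
Definition aa i : R := kk - bb i - cc i.
Definition Pd (d : R) (i j : nat) : R :=
  (j.+1 == i)%:R * cc i + (j == i)%:R * d + (j == i.+1)%:R * bb i.

Lemma sphere_exists x y : exists2 i, (i <= D)%N & y \in sphere e i x.
Proof. exact: ball_sphere (cover x y). Qed.

Lemma sum_delta n m (G : nat -> R) :
  \sum_(i < n) ((i : nat) == m)%:R * G i = if (m < n)%N then G m else 0.
Proof.
elim: n => [|n IH]; first by rewrite big_ord0 ltn0.
rewrite big_ord_recr /= IH; case: (ltngtP m n) => h.
- have -> : (m < n.+1)%N by lia.
  by rewrite mul0r addr0.
- have -> : (m < n.+1)%N = false by lia.
  by rewrite mul0r addr0.
- by rewrite -h ltnSn mul1r add0r.
Qed.

Lemma sum_right i d (F : nat -> R) : (i <= D)%N ->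
  \sum_(j < D.+1) Pd d i j * F j = cc i * F i.-1 + d * F i + bb i * F i.+1.
Proof.
move=> hi.
rewrite /Pd; under eq_bigr do rewrite !mulrDl.
rewrite !big_split /=.
have E1 : \sum_(j < D.+1) (j.+1 == i)%:R * cc i * F j = cc i * F i.-1.
  case: i hi => [|i] hi.
    rewrite big1; first by rewrite /cc /= mul0r.
    by move=> j _; rewrite /cc /= mulr0 mul0r.
  under eq_bigr do rewrite eqSS -mulrA.
  by rewrite (sum_delta _ _ (fun j => cc i.+1 * F j)) ltnS (ltnW hi).
have E2 : \sum_(j < D.+1) ((j:nat) == i)%:R * d * F j = d * F i.
  under eq_bigr do rewrite -mulrA.
  by rewrite (sum_delta _ _ (fun j => d * F j)) ltnS hi.
have E3 : \sum_(j < D.+1) ((j:nat) == i.+1)%:R * bb i * F j = bb i * F i.+1.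
  under eq_bigr do rewrite -mulrA [bb i * _]mulrC mulrA.
  rewrite -big_distrl /= (sum_delta _ _ F) ltnS mulrC.
  by rewrite /bb; case: ifP => //; rewrite !mul0r.
by rewrite E1 E2 E3.
Qed.

Lemma sum_left j (dd F : nat -> R) : (j <= D)%N ->
  \sum_(i < D.+1) F i * Pd (dd i) i j =
    F j.+1 * cc j.+1 + F j * dd j + (if j is j'.+1 then F j' * bb j' else 0).
Proof.
move=> hj.
rewrite /Pd; under eq_bigr do rewrite !mulrDr.
rewrite !big_split /=.
have E1 : \sum_(i < D.+1) F i * ((j.+1 == i)%:R * cc i) = F j.+1 * cc j.+1.
  under eq_bigr do rewrite eq_sym mulrCA.
  rewrite (sum_delta _ _ (fun i => F i * cc i)) ltnS.
  by case: ifP => // h; rewrite /cc h andbF mulr0.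
have E2 : \sum_(i < D.+1) F i * ((j == (i:nat))%:R * dd i) = F j * dd j.
  under eq_bigr do rewrite eq_sym mulrCA.
  by rewrite (sum_delta _ _ (fun i => F i * dd i)) ltnS hj.
have E3 : \sum_(i < D.+1) F i * ((j == (i:nat).+1)%:R * bb i) =
    (if j is j'.+1 then F j' * bb j' else 0).
  case: j hj {E1 E2} => [|j] hj.
    by rewrite big1 // => i _; rewrite mul0r mulr0.
  under eq_bigr do rewrite eqSS eq_sym mulrCA.
  by rewrite (sum_delta _ _ (fun i => F i * bb i)) ltnS (ltnW hj).
by rewrite E1 E2 E3.
Qed.


Definition Av (v : T -> R) (y : T) : R := \sum_w (e y w)%:R * v w.
Definition sph (z : T) (u : nat -> R) (y : T) : R :=
  \sum_(j < D.+1) (y \in sphere e j z)%:R * u j.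
Definition Ssum (z : T) (v : T -> R) (j : nat) : R :=
  \sum_w (w \in sphere e j z)%:R * v w.

Lemma sph_val z u y i : (i <= D)%N -> y \in sphere e i z -> sph z u y = u i.
Proof.
move=> hi hy; have hi' : (i < D.+1)%N by [].
rewrite /sph (bigD1 (Ordinal hi')) //= hy mul1r big1 ?addr0 // => j hj.
case hj': (y \in sphere e j z); last by rewrite mul0r.
have ij := sphere_uniq hy hj'.
by move: hj; rewrite -val_eqE /= -ij eqxx.
Qed.

Lemma card_sum (S : {set T}) y :
  (#|S :&: nbhd e y|%:R : R) = \sum_w (e y w)%:R * (w \in S)%:R.
Proof.
rewrite -sum1_card natr_sum big_mkcond /=; apply: eq_bigr => w _.
rewrite !inE; case: (w \in S); case: (e y w); by rewrite ?mulr1 ?mulr0.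
Qed.

Lemma card_nbhd y : (#|nbhd e y|%:R : R) = \sum_w (e y w)%:R.
Proof.
rewrite -sum1_card natr_sum big_mkcond /=; apply: eq_bigr => w _.
by rewrite !inE; case: (e y w).
Qed.

Lemma deg y : #|nbhd e y| = bi 0.
Proof.
have hy0 : y \in sphere e 0 y by rewrite mem_sphere0.
have [H _] := dr (leq0n D) hy0.
rewrite -(H D_gt0); apply: eq_card => w.
by rewrite in_setI sphere1E // !inE andbb.
Qed.

Lemma sum_spheres w z : \sum_(j < D.+1) (w \in sphere e j z)%:R = 1 :> R.
Proof.
have [i hi hw] := sphere_exists z w.
have := sph_val (fun _ => 1) hi hw; rewrite /sph.
by under eq_bigr do rewrite mulr1.
Qed.

Lemma count_off z y i j : (i <= D)%N -> (j <= D)%N -> y \in sphere e i z ->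
  (#|sphere e j z :&: nbhd e y|%:R : R) =
    Pd (#|sphere e i z :&: nbhd e y|%:R) i j.
Proof.
move=> hi hj hy; rewrite /Pd.
case E1: (j.+1 == i).
  have Ej : j = i.-1 by move/eqP: E1 => <-.
  have -> : (j == i) = false by lia.
  have -> : (j == i.+1) = false by lia.
  have [_ H2] := dr hi hy.
  rewrite Ej H2; last by lia.
  rewrite /cc; have -> : (0 < i <= D)%N by lia.
  by rewrite mul1r !mul0r !addr0.
case E2: (j == i).
  move/eqP: E2 => ->; have -> : (i == i.+1) = false by lia.
  by rewrite ?eqxx ?mul0r ?mul1r ?add0r ?addr0.
case E3: (j == i.+1).
  have hiD : (i < D)%N by lia.
  have [H1 _] := dr hi hy.
  move/eqP: E3 => ->; rewrite H1 // /bb hiD.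
  by rewrite !mul0r mul1r !add0r.
rewrite !mul0r !addr0; apply/eqP; rewrite pnatr_eq0 cards_eq0; apply/eqP/setP => w.
rewrite !inE; apply/negP => /andP [hw hyw].
have [h1 h2] := sphere_adj esym hy hw hyw.
lia.
Qed.

Lemma card_diag z y i : (i <= D)%N -> y \in sphere e i z ->
  (#|sphere e i z :&: nbhd e y|%:R : R) = aa i.
Proof.
move=> hi hy.
have H : kk = \sum_(j < D.+1) (#|sphere e j z :&: nbhd e y|%:R : R).
  rewrite /kk -(deg y) card_nbhd.
  transitivity (\sum_w \sum_(j < D.+1) (e y w)%:R * (w \in sphere e j z)%:R : R).
    by apply: eq_bigr => w _; rewrite -big_distrr /= sum_spheres mulr1.
  rewrite exchange_big /=; apply: eq_bigr => j _.
  by rewrite card_sum.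
have H2 : \sum_(j < D.+1) (#|sphere e j z :&: nbhd e y|%:R : R) =
   \sum_(j < D.+1) Pd (#|sphere e i z :&: nbhd e y|%:R) i j * (fun _ => 1) j.
  by apply: eq_bigr => j _; rewrite mulr1 (count_off hi (leq_ord j) hy).
move: H; rewrite H2 (sum_right _ (fun _ => 1) hi) !mulr1 /aa => ->.
by ring.
Qed.

Lemma count z y i j : (i <= D)%N -> (j <= D)%N -> y \in sphere e i z ->
  (#|sphere e j z :&: nbhd e y|%:R : R) = Pd (aa i) i j.
Proof. by move=> hi hj hy; rewrite (count_off hi hj hy) (card_diag hi hy). Qed.

Lemma A_sph z u th :
  (forall i, (i <= D)%N -> cc i * u i.-1 + aa i * u i + bb i * u i.+1 = th * u i) ->
  forall y, Av (sph z u) y = th * sph z u y.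
Proof.
move=> H y; have [i hi hy] := sphere_exists z y.
rewrite (sph_val u hi hy) -(H i hi) -(sum_right _ _ hi) /Av /sph.
under eq_bigr do rewrite big_distrr /=.
rewrite exchange_big /=; apply: eq_bigr => j _.
rewrite -(count hi (leq_ord j) hy) card_sum big_distrl /=.
by apply: eq_bigr => w _; rewrite mulrA.
Qed.

Lemma left_eq z v mu : (forall y, Av v y = mu * v y) ->
  forall j, (j <= D)%N ->
  Ssum z v j.+1 * cc j.+1 + Ssum z v j * aa j +
    (if j is j'.+1 then Ssum z v j' * bb j' else 0) = mu * Ssum z v j.
Proof.
move=> H j hj; rewrite -(sum_left aa (Ssum z v) hj).
transitivity (\sum_w v w * (#|sphere e j z :&: nbhd e w|%:R : R)).
  rewrite /Ssum; under eq_bigr do rewrite big_distrl /=.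
  rewrite exchange_big /=; apply: eq_bigr => w _.
  have [i hi hw] := sphere_exists z w.
  rewrite (count hi hj hw) -(sph_val (fun i => Pd (aa i) i j) hi hw) /sph big_distrr /=.
  by apply: eq_bigr => k _; rewrite mulrCA mulrA.
rewrite /Ssum big_distrr /=.
under [RHS]eq_bigr do rewrite mulrCA -H /Av big_distrr /=.
rewrite [RHS]exchange_big /=; apply: eq_bigr => w _.
rewrite card_sum big_distrr /=; apply: eq_bigr => y _.
by rewrite (esym y w); ring.
Qed.

Hypothesis diam : exists x y : T, y \in sphere e D x.

Lemma spheres_ne : exists x0, forall n, (n <= D)%N -> exists y, y \in sphere e n x0.
Proof.
have [x0 [y0 hy0]] := diam; exists x0.
suff H : forall m, (m <= D)%N -> exists y, y \in sphere e (D - m) x0.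
  by move=> n hn; have := H (D - n)%N (leq_subr _ _); rewrite subKn.
elim => [|m IH] hm; first by exists y0; rewrite subn0.
have [y hy] := IH (ltnW hm).
have E : (D - m = (D - m.+1).+1)%N by lia.
rewrite E in hy; have [w hw _] := sphere_down hy; by exists w.
Qed.

Lemma bi_pos i : (i < D)%N -> (0 < bi i)%N.
Proof.
move=> hi; have [x0 H] := spheres_ne.
have [y hy] := H i.+1 hi.
have [w hw hwy] := sphere_down hy.
have [H1 _] := dr (ltnW hi) hw.
rewrite -(H1 hi); apply/card_gt0P; exists y; by rewrite in_setI hy inE hwy.
Qed.

Lemma ci_pos i : (0 < i <= D)%N -> (0 < ci i)%N.
Proof.
case: i => [//|i] /= hi; have [x0 H] := spheres_ne.
have [y hy] := H i.+1 hi.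
have [w hw hwy] := sphere_down hy.
have [_ H2] := dr hi hy.
rewrite -(H2 isT); apply/card_gt0P; exists w; by rewrite in_setI hw inE esym hwy.
Qed.

Lemma bb_ge0 i : 0 <= bb i.
Proof. by rewrite /bb; case: ifP. Qed.

Lemma bb_gt0 i : (i < D)%N -> 0 < bb i.
Proof. by move=> hi; rewrite /bb hi ltr0n bi_pos. Qed.

Lemma cc_gt0 i : (0 < i <= D)%N -> 0 < cc i.
Proof. by move=> hi; rewrite /cc hi ltr0n ci_pos. Qed.

Lemma cc_ge0 i : 0 <= cc i.
Proof. by rewrite /cc; case: ifP. Qed.

Variable b : int.
Variables alpha beta : R.
Hypothesis b2 : (2 <= b)%R.
Definition X i := qbr R b i.
Hypothesis hb : forall i, (i < D)%N -> (bi i)%:R = (X D - X i) * (beta - alpha * X i).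
Hypothesis hc : forall i, (1 <= i <= D)%N -> (ci i)%:R = X i * (1 + alpha * X i.-1).

Definition q : R := b%:~R.
Lemma q_gt1 : 1 < q.
Proof.
have : (2%:~R : R) <= q by rewrite /q ler_int.
move=> h; apply: lt_le_trans h; by rewrite ltr1z.
Qed.

Lemma qm1_neq0 : q - 1 != 0.
Proof. by rewrite subr_eq0 gt_eqF // q_gt1. Qed.

Lemma X0 : X 0 = 0.
Proof. by rewrite /X /qbr expr0 subrr mul0r. Qed.

Lemma X1 : X 1 = 1.
Proof. by rewrite /X /qbr expr1 -/q divff // qm1_neq0. Qed.

Lemma XS i : X i.+1 = X i + q ^+ i.
Proof.
rewrite /X /qbr -/q exprS.
have h := qm1_neq0.
by field.
Qed.

Lemma q_exp_gt0 i : 0 < q ^+ i.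
Proof. by rewrite exprn_gt0 // (lt_trans ltr01 q_gt1). Qed.

Lemma X_lt m n : (m < n)%N -> X m < X n.
Proof.
elim: n => [//|n IH]; rewrite ltnS leq_eqVlt => /orP [/eqP ->|h].
  by rewrite XS ltrDl q_exp_gt0.
apply: lt_trans (IH h) _; by rewrite XS ltrDl q_exp_gt0.
Qed.

Lemma X_ge0 i : 0 <= X i.
Proof. by case: i => [|i]; [rewrite X0 | apply: ltW; rewrite -X0 X_lt]. Qed.

Lemma X_gt0 i : (0 < i)%N -> 0 < X i.
Proof. by move=> h; rewrite -X0 X_lt. Qed.

Definition theta : R := - X D.
Definition rho i : R := (X D - X i) / X i.+1.

Lemma rho_gt0 i : (i < D)%N -> 0 < rho i.
Proof. by move=> h; rewrite /rho divr_gt0 ?subr_gt0 ?X_lt ?X_gt0. Qed.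

Lemma rhoD : rho D = 0.
Proof. by rewrite /rho subrr mul0r. Qed.

Lemma kkE : kk = X D * beta.
Proof. by rewrite /kk hb // X0 mulr0 subr0 subr0. Qed.

Lemma bbE i : (i <= D)%N -> bb i = (X D - X i) * (beta - alpha * X i).
Proof.
rewrite /bb leq_eqVlt => /orP [/eqP ->|h]; last by rewrite h hb.
by rewrite ltnn subrr mul0r.
Qed.

Lemma ccE i : (0 < i <= D)%N -> cc i = X i * (1 + alpha * X i.-1).
Proof. by move=> h; rewrite /cc h hc. Qed.

Lemma ccrho i : (i <= D)%N -> cc i.+1 * rho i = (1 + alpha * X i) * (X D - X i).
Proof.
rewrite leq_eqVlt => /orP [/eqP ->|h]; first by rewrite rhoD subrr !mulr0.
rewrite ccE ?h //= /rho.
have hx : X i.+1 != 0 by rewrite gt_eqF // X_gt0.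
by field.
Qed.

Lemma bbrho i : (i < D)%N -> bb i / rho i = X i.+1 * (beta - alpha * X i).
Proof.
move=> h; rewrite bbE ?(ltnW h) // /rho.
have hx : X i.+1 != 0 by rewrite gt_eqF // X_gt0.
have hy : X D - X i != 0 by rewrite subr_eq0 gt_eqF // X_lt.
by field; rewrite hx hy.
Qed.

Lemma ID i : (i <= D)%N ->
  aa i - (if i is i'.+1 then bb i' / rho i' else 0) - cc i.+1 * rho i = theta.
Proof.
move=> hi; rewrite /aa (ccrho hi) kkE (bbE hi) /theta.
case: i hi => [|i] hi.
  by rewrite /cc /= X0; ring.
rewrite (bbrho hi) ccE //=; ring.
Qed.

Lemma aa0 : aa 0 = 0.
Proof. by rewrite /aa /kk /bb D_gt0 /cc /= subrr subr0. Qed.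

Lemma cc1 : cc 1 = 1.
Proof. by rewrite ccE /= ?D_gt0 // X1 X0 mulr0 addr0 mulr1. Qed.

Definition Sstar j : R := \prod_(k < j) (- rho k).
Definition uu j : R := \prod_(k < j) (- rho k * cc k.+1 / bb k).

Lemma SstarS j : Sstar j.+1 = Sstar j * - rho j.
Proof. by rewrite /Sstar big_ord_recr. Qed.

Lemma uuS j : uu j.+1 = uu j * (- rho j * cc j.+1 / bb j).
Proof. by rewrite /uu big_ord_recr. Qed.

Lemma Sstar0 : Sstar 0 = 1. Proof. by rewrite /Sstar big_ord0. Qed.
Lemma uu0 : uu 0 = 1. Proof. by rewrite /uu big_ord0. Qed.

Lemma rho_neq0 i : (i < D)%N -> rho i != 0.
Proof. by move=> h; rewrite gt_eqF // rho_gt0. Qed.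

Lemma bb_neq0 i : (i < D)%N -> bb i != 0.
Proof. by move=> h; rewrite gt_eqF // bb_gt0. Qed.

Lemma kk_gt0 : 0 < kk.
Proof. by rewrite /kk ltr0n bi_pos. Qed.

Lemma bb0 : bb 0 = kk.
Proof. by rewrite /bb D_gt0. Qed.

Lemma uu1 : uu 1 = - X D / kk.
Proof.
rewrite (uuS 0) uu0 cc1 bb0 /rho X1 X0 subr0 divr1; ring.
Qed.

Lemma Sstar_left j : (j <= D)%N ->
  Sstar j.+1 * cc j.+1 + Sstar j * aa j +
    (if j is j'.+1 then Sstar j' * bb j' else 0) = theta * Sstar j.
Proof.
move=> hj; rewrite -(ID hj) SstarS.
case: j hj => [|j] hj; first by rewrite Sstar0; ring.
rewrite SstarS.
have hr := rho_neq0 hj.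
by field.
Qed.

Lemma uu_right i : (i <= D)%N ->
  cc i * uu i.-1 + aa i * uu i + bb i * uu i.+1 = theta * uu i.
Proof.
move=> hi; rewrite -(ID hi).
have hB : bb i * uu i.+1 = - (cc i.+1 * rho i) * uu i.
  rewrite uuS; case: (ltnP i D) => h.
    by have hb0 := bb_neq0 h; field.
  have -> : i = D by apply/eqP; rewrite eqn_leq hi h.
  by rewrite /bb /cc ltnn /= !mul0r oppr0 mul0r.
rewrite hB; case: i hi {hB} => [|i] hi.
  by rewrite /cc /=; ring.
rewrite uuS /=.
have hr := rho_neq0 hi; have hb0 := bb_neq0 hi.
by field; rewrite hr hb0.
Qed.

Lemma Sstar_uu_ge0 j : 0 <= Sstar j * uu j.
Proof.
rewrite /Sstar /uu -big_split /=; apply: prodr_ge0 => k _.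
have -> : - rho k * (- rho k * cc k.+1 / bb k) = (rho k * rho k) * (cc k.+1 / bb k) by ring.
by rewrite mulr_ge0 ?divr_ge0 ?bb_ge0 ?cc_ge0 // -expr2 sqr_ge0.
Qed.

Definition cst : R := \sum_(j < D.+1) uu j * Sstar j.

Lemma cst_gt0 : 0 < cst.
Proof.
rewrite /cst big_ord_recl /= uu0 Sstar0 mulr1.
apply: lt_le_trans (ltr01) _; rewrite lerDl; apply: sumr_ge0 => i _.
by rewrite mulrC Sstar_uu_ge0.
Qed.

Lemma left_uniq (F G : nat -> R) : F 0 = G 0 ->
  (forall j, (j < D)%N -> F j.+1 * cc j.+1 + F j * aa j +
    (if j is j'.+1 then F j' * bb j' else 0) = theta * F j) ->
  (forall j, (j < D)%N -> G j.+1 * cc j.+1 + G j * aa j +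
    (if j is j'.+1 then G j' * bb j' else 0) = theta * G j) ->
  forall j, (j <= D)%N -> F j = G j.
Proof.
move=> h0 HF HG.
suff H : forall j, (j <= D)%N -> forall i, (i <= j)%N -> F i = G i.
  by move=> j hj; apply: (H j hj).
elim => [|j IH] hj i hi; first by move: hi; rewrite leqn0 => /eqP ->.
rewrite leq_eqVlt in hi; case/orP: hi => [/eqP ->|hi]; last by apply: IH => //; exact: ltnW.
have hjD : (j < D)%N by [].
have e1 := HF j hjD; have e2 := HG j hjD.
have Ej : F j = G j by apply: IH => //; exact: ltnW.
have Ej' : (if j is j'.+1 then F j' * bb j' else 0) = (if j is j'.+1 then G j' * bb j' else 0).
  case: j IH hj {hjD e1 e2 Ej} => [//|j] IH hj.
  by rewrite (IH (ltnW hj) j (leqnSn j)).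
have hc0 : cc j.+1 != 0 by rewrite gt_eqF // cc_gt0.
apply: (mulIf hc0).
move: e1 e2; rewrite Ej Ej'; set t := (if j is j'.+1 then G j' * bb j' else 0) => e1 e2.
by apply: (addIr (G j * aa j + t)); rewrite !addrA e1 e2.
Qed.

Lemma Ssum0 z v : Ssum z v 0 = v z.
Proof.
rewrite /Ssum (bigD1 z) //= set11 mul1r big1 ?addr0 // => w hw.
by rewrite inE (negbTE hw) mul0r.
Qed.

Lemma gram z z' : \sum_y sph z uu y * sph z' uu y = cst * sph z' uu z.
Proof.
set g := sph z' uu.
have Ag : forall y, Av g y = theta * g y by apply: A_sph; exact: uu_right.
have HS : forall j, (j <= D)%N -> Ssum z g j = g z * Sstar j.
  apply: left_uniq.
  - by rewrite Ssum0 Sstar0 mulr1.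
  - by move=> j hj; apply: left_eq => //; exact: ltnW.
  - move=> j hj; have := Sstar_left (ltnW hj).
    by case: j hj => [|j] hj /= E; rewrite [RHS]mulrCA -E; ring.
rewrite /sph; under eq_bigr do rewrite big_distrl /=.
rewrite exchange_big /= /cst big_distrl /=; apply: eq_bigr => j _.
have := HS j (leq_ord j); rewrite /Ssum => E.
transitivity (uu j * \sum_w (w \in sphere e j z)%:R * g w).
  by rewrite big_distrr /=; apply: eq_bigr => y _; rewrite /g /sph; ring.
by rewrite E; ring.
Qed.

Definition clique_ok (C : {set T}) := forall x y, x \in C -> y \in C -> x != y -> e x y.

Lemma clique_bound (C : {set T}) : clique_ok C ->
  (#|C|%:R - 1) * X D <= kk.
Proof.
move=> hC.
set n : R := #|C|%:R.
set f := fun y => \sum_(z in C) sph z uu y.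
have H0 : 0 <= \sum_y f y ^+ 2 by apply: sumr_ge0 => y _; exact: sqr_ge0.
have Hg : forall z z', z \in C -> z' \in C ->
    sph z' uu z = uu 1 + (z' == z)%:R * (1 - uu 1).
  move=> z z' hz hz'; case: eqP => [->|hne].
    by rewrite (@sph_val _ _ _ 0) ?mem_sphere0 // uu0 /=; ring.
  rewrite (@sph_val _ _ _ 1) ?D_gt0 //=; first by ring.
  by rewrite sphere1E //; apply: hC => //; apply/eqP.
have Hsum : forall z, z \in C -> \sum_(z' in C) sph z' uu z = n * uu 1 + (1 - uu 1).
  move=> z hz; rewrite (eq_bigr (fun z' => uu 1 + (z' == z)%:R * (1 - uu 1))); last first.
    by move=> z' hz'; rewrite Hg.
  rewrite big_split /= sumr_const -big_distrl /=.
  rewrite (bigD1 z) //= eqxx big1 ?addr0; last first.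
    by move=> z' /andP [_ h]; rewrite (negbTE h).
  by rewrite /n mulr_natl mul1r.
have E : \sum_y f y ^+ 2 = cst * (n * (n * uu 1 + (1 - uu 1))).
  transitivity (\sum_y \sum_(z in C) \sum_(z' in C) sph z uu y * sph z' uu y).
    apply: eq_bigr => y _.
    rewrite /f expr2 big_distrl /=; apply: eq_bigr => z _.
    by rewrite big_distrr.
  rewrite exchange_big /=.
  under eq_bigr => z _ do rewrite exchange_big /=.
  under eq_bigr => z _ do under eq_bigr do rewrite gram.
  under eq_bigr => z hz do rewrite -big_distrr /= Hsum //.
  by rewrite -big_distrr /= sumr_const /n [X in _ = cst * X]mulr_natl.
rewrite E in H0.
have hcst := cst_gt0.
have H1 : 0 <= n * (n * uu 1 + (1 - uu 1)).
  by rewrite -(pmulr_rge0 _ hcst).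
rewrite uu1 in H1.
have hk := kk_gt0.
have hX : 0 < X D by apply: X_gt0.
case: (posnP #|C|) => hC0.
  rewrite /n hC0 sub0r mulN1r; apply: le_trans (ltW hk); by rewrite oppr_le0 ltW.
have hn0 : 0 < n by rewrite /n ltr0n.
have E2 : n * (n * (- X D / kk) + (1 - - X D / kk)) = n * (1 - (n - 1) * X D / kk) by ring.
rewrite E2 (pmulr_rge0 _ hn0) subr_ge0 in H1.
by rewrite ler_pdivrMr // mul1r in H1.
Qed.

Lemma W_bound mu (W : nat -> R) : mu <= theta -> 0 < W 0 ->
  (forall j, (j <= D)%N -> - (W j.+1 * cc j.+1) + W j * aa j -
     (if j is j'.+1 then W j' * bb j' else 0) = mu * W j) -> theta <= mu.
Proof.
move=> hmu hW0 HW.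
have step : forall j, (j < D)%N -> 0 < W j /\ rho j * W j <= W j.+1.
  elim => [|j IH] hj.
    split => //.
    have e0 := HW 0%N (leq0n D); have id0 := ID (leq0n D).
    rewrite aa0 cc1 /= in e0 id0.
    have -> : W 1%N = - mu * W 0%N by nra.
    have -> : rho 0 = - theta by nra.
    by apply: ler_wpM2r; [exact: ltW | lra].
  have [hWj hr] := IH (ltnW hj).
  have hrj := rho_gt0 (ltnW hj).
  have hWj1 : 0 < W j.+1 by apply: lt_le_trans hr; rewrite mulr_gt0.
  split => //.
  set P := bb j / rho j.
  have hP : bb j = P * rho j by rewrite /P divfK // rho_neq0 // ltnW.
  have hP0 : 0 <= P by rewrite /P divr_ge0 ?bb_ge0 // ltW.
  have ee := HW j.+1 (ltnW hj); have id := ID (ltnW hj).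
  rewrite /= -/P hP in ee id.
  have hcc : 0 < cc j.+2 by apply: cc_gt0; rewrite hj.
  have h1 : 0 <= P * (W j.+1 - rho j * W j) by rewrite mulr_ge0 // subr_ge0.
  have h2 : 0 <= (theta - mu) * W j.+1 by rewrite mulr_ge0 ?subr_ge0 // ltW.
  have id' := congr1 (fun t => t * W j.+1) id.
  rewrite -(ler_pM2l hcc); simpl in id'.
  nra.
have hD1 : D.-1.+1 = D by rewrite prednK.
have hD' : (D.-1 < D)%N by rewrite -{2}hD1.
have [hW hr] := step D.-1 hD'.
rewrite hD1 in hr.
have hrD := rho_gt0 hD'.
have hWD : 0 < W D by apply: lt_le_trans hr; rewrite mulr_gt0.
set P := bb D.-1 / rho D.-1.
have hP : bb D.-1 = P * rho D.-1 by rewrite /P divfK // rho_neq0.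
have hP0 : 0 <= P by rewrite /P divr_ge0 ?bb_ge0 // ltW.
have ip1 : (if D is j'.+1 then W j' * bb j' else 0) = W D.-1 * bb D.-1.
  by move: D_gt0; case: (D).
have ip2 : (if D is j'.+1 then bb j' / rho j' else 0) = bb D.-1 / rho D.-1.
  by move: D_gt0; case: (D).
have ee := HW D (leqnn D); rewrite ip1 in ee.
have id := ID (leqnn D); rewrite ip2 in id.
rewrite -/P hP in ee id.
have hc0 : cc D.+1 = 0 by rewrite /cc ltnn andbF.
rewrite hc0 in ee id.
have h1 : 0 <= P * (W D - rho D.-1 * W D.-1) by rewrite mulr_ge0 // subr_ge0.
have id' := congr1 (fun t => t * W D) id; simpl in id'.
rewrite -(ler_pM2r hWD).
nra.
Qed.

Lemma eig_of_fun (v : T -> R) mu y0 : v y0 != 0 -> (forall y, Av v y = mu * v y) ->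
  eigenvalue (@adjacency_matrix T e R) mu.
Proof.
move=> hv Hv; apply/eigenvalueP; exists (\row_i v (enum_val i)).
  apply/rowP => j; rewrite !mxE.
  under eq_bigr do rewrite !mxE.
  rewrite -(big_enum_val (fun x => v x * (e x (enum_val j))%:R)) /=.
  rewrite -Hv /Av; apply: eq_bigr => w _; by rewrite mulrC esym.
apply/eqP => /rowP /(_ (enum_rank y0)); rewrite !mxE enum_rankK => h.
by move: hv; rewrite h eqxx.
Qed.

Lemma fun_of_eig mu : eigenvalue (@adjacency_matrix T e R) mu ->
  exists v : T -> R, (exists y, v y != 0) /\ forall y, Av v y = mu * v y.
Proof.
case/eigenvalueP => w hw hw0.
exists (fun x => w 0 (enum_rank x)); split.
  case: (pickP (fun i => w 0 i != 0)) => [i hi|h].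
    by exists (enum_val i); rewrite enum_valK.
  case/eqP: hw0; apply/rowP => j; rewrite !mxE.
  by have := h j => /= /negbFE /eqP.
move/rowP: hw => hw y; have := hw (enum_rank y); rewrite !mxE => <-.
rewrite /Av (big_enum_val (fun x => (e y x)%:R * w 0 (enum_rank x))) /=.
apply: eq_bigr => i _; rewrite !mxE enum_valK enum_rankK mulrC esym //.
Qed.

Lemma T_inh : exists z : T, True.
Proof. by have [x _] := diam; exists x. Qed.

Lemma theta_eig : eigenvalue (@adjacency_matrix T e R) theta.
Proof.
have [z _] := T_inh.
apply: (@eig_of_fun (sph z uu) theta z).
  rewrite (@sph_val _ _ _ 0) ?mem_sphere0 // uu0; exact: oner_neq0.
apply: A_sph; exact: uu_right.
Qed.

Lemma theta_min mu : eigenvalue (@adjacency_matrix T e R) mu -> theta <= mu.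
Proof.
case/fun_of_eig => v [[y0 hv] Hv].
rewrite leNgt; apply/negP => hlt.
set W := fun j => (-1) ^+ j * Ssum y0 v j * v y0.
have : theta <= mu.
  apply: (@W_bound mu W (ltW hlt)).
    rewrite /W expr0 mul1r Ssum0 lt0r mulf_neq0 //= -expr2 sqr_ge0 //.
  move=> j hj; have := left_eq y0 Hv hj.
  rewrite /W; move=> E; have E' := congr1 (fun t => t * ((-1) ^+ j * v y0)) E.
  simpl in E'; case: j hj E E' => [|j] hj E E' /=.
    rewrite !expr0 expr1 in E' *; lra.
  rewrite !exprS in E' *; lra.
by rewrite leNgt hlt.
Qed.

Lemma smallest_theta : smallest_eigenvalue e theta.
Proof. by split; [exact: theta_eig | exact: theta_min]. Qed.

Lemma smallest_uniq t : smallest_eigenvalue e t -> t = theta.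
Proof.
case=> ht hmin; apply/eqP; rewrite eq_le (hmin _ theta_eig) /=.
exact: theta_min.
Qed.

Variable gamma : nat.
Hypothesis pls_uniq : forall x y : T, x != y ->
     forall L1 L2 : {set T}, is_line e gamma L1 -> is_line e gamma L2 ->
       x \in L1 -> y \in L1 -> x \in L2 -> y \in L2 -> L1 = L2.
Hypothesis pls_ex : forall x y : T, x != y ->
     (e x y <-> exists L : {set T}, [/\ is_line e gamma L, x \in L & y \in L]).

Lemma line_clique L : is_line e gamma L -> clique_ok L.
Proof.
case/andP => /andP [hcl _] _ x y hx hy hxy.
move/forallP: hcl => /(_ x); rewrite hx /= => /forallP /(_ y); rewrite hy /=.
by move/implyP; apply.
Qed.

Lemma per_y x y : (e x y)%:R = \sum_(L in lines_through e gamma x) (y \in L :\ x)%:R :> R.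
Proof.
case hxy: (e x y).
  have hne : x != y by apply: contraTneq hxy => ->; rewrite eirr.
  have [L0 [hL0 hx0 hy0]] := (pls_ex hne).1 hxy.
  have hL0x : L0 \in lines_through e gamma x by rewrite inE hL0 hx0.
  rewrite (bigD1 L0) //= !inE eq_sym hne hy0 /= big1 ?addr0 // => L /andP [].
  rewrite inE => /andP [hL hx] hLn.
  rewrite !inE; case hyL: (y \in L); last by rewrite andbF.
  by move: hLn; rewrite (pls_uniq hne hL hL0 hx hyL hx0 hy0) eqxx.
rewrite big1 // => L; rewrite inE => /andP [hL hx].
rewrite in_setD1; case hyL: (y \in L); last by rewrite andbF.
case: (y =P x) => [_|/eqP hne] //=.
by move: hxy; rewrite (line_clique hL hx hyL) // eq_sym.
Qed.

Lemma sum_mem (S : {set T}) : \sum_y (y \in S)%:R = #|S|%:R :> R.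
Proof. rewrite -sum1_card natr_sum [RHS]big_mkcond; apply: eq_bigr => y _; by case: (y \in S). Qed.

Lemma sum_lines x : kk = \sum_(L in lines_through e gamma x) (#|L|%:R - 1).
Proof.
rewrite /kk -(deg x) card_nbhd.
under eq_bigr do rewrite per_y.
rewrite exchange_big /=; apply: eq_bigr => L; rewrite inE => /andP [_ hx].
rewrite sum_mem (cardsD1 x L) hx natrD /=; ring.
Qed.

Lemma main_sec x :
  X D <= (#|lines_through e gamma x|)%:R /\
  ((#|lines_through e gamma x|)%:R = X D <-> @delsarte_vertex T e R (bi 0) gamma x).
Proof.
set Ls := lines_through e gamma x.
set r : R := #|Ls|%:R.
have hX : 0 < X D by apply: X_gt0.
have hk := kk_gt0.
have hLb L : L \in Ls -> #|L|%:R - 1 <= kk / X D.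
  rewrite inE => /andP [hL _]; rewrite ler_pdivlMr //; exact: clique_bound (line_clique hL).
have Hsum := sum_lines x; rewrite -/Ls in Hsum.
have Hc : \sum_(L in Ls) kk / X D = r * (kk / X D) by rewrite sumr_const [RHS]mulrC [RHS]mulr_natr.
have Hle : kk <= r * (kk / X D).
  by rewrite {1}Hsum -Hc; apply: ler_sum => L hL; exact: hLb.
have Hle' : kk * X D <= r * kk by rewrite mulrA ler_pdivlMr // in Hle.
split; first by nra.
have hXn : X D != 0 by rewrite gt_eqF.
have hkn : kk != 0 by rewrite gt_eqF.
split.
  move=> hr L hL.
  have H0 : \sum_(L in Ls) (kk / X D - (#|L|%:R - 1)) = 0.
    by rewrite sumrB Hc -Hsum hr mulrCA divff ?mulr1 ?subrr.
  have hge : forall L', L' \in Ls -> 0 <= kk / X D - (#|L'|%:R - 1).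
    by move=> L' hL'; rewrite subr_ge0 hLb.
  have h0 := psumr_eq0P hge H0 hL.
  split.
    by move: hL; rewrite inE => /andP [/andP [/andP [hcl _] _] _].
  exists theta; split; first exact: smallest_theta.
  rewrite /theta opprK -/kk; lra.
move=> hdv.
have hsz : forall L, L \in Ls -> #|L|%:R - 1 = kk / X D.
  move=> L hL; have [_ [t [ht hs]]] := hdv L hL.
  rewrite (smallest_uniq ht) /theta opprK -/kk in hs; lra.
have E : kk = r * (kk / X D).
  by rewrite {1}Hsum -Hc; apply: eq_bigr => L hL; exact: hsz.
have E2 : r * kk = X D * kk.
  by rewrite {2}E; field.
exact: (mulIf hkn E2).
Qed.

End DRG.

Unset Implicit Arguments.

Theorem lemma10 (R : realType) (T : finType) (e : rel T) (D : nat)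
  (bi ci : nat -> nat) (b : int) (alpha beta : R) (gamma : nat) :
  distance_regular e D bi ci ->
  classical_parameters D b alpha beta bi ci ->
  (2 <= b)%R -> (3 <= D)%N ->
  PLS_property e gamma ->
  forall x : T,
    qbr R b D <= (#|lines_through e gamma x|)%:R /\
    ((#|lines_through e gamma x|)%:R = qbr R b D <->
       @delsarte_vertex T e R (bi 0%N) gamma x).
Proof.
move=> [[esym eirr] cover diam dr] [_ [hb hc]] b2 hD [_ [puniq pex]] x.
have D_gt0 : (0 < D)%N by apply: leq_trans hD.
exact: (@main_sec R T e esym eirr D bi ci D_gt0 cover dr diam b alpha beta b2 hb hc
          gamma puniq pex x).
Qed.
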